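(* Let $g,h:[0,1]\to\mathbb{R}$ be piecewise continuous and strictly monotonic and regular. Let $0=a_{g,0}<a_{g,1}<\dots<a_{g,M_g}=1$ be the partition of $[0,1]$ given by the ordered turning points of $g$, and $0=a_{h,0}<\dots<a_{h,M_h}=1$ the analogous partition for $h$. Let $T_g=F_g\circ g$, $T_h=F_h\circ h$, where $F_g,F_h$ are the distribution functions of $g(U_0),h(U_0)$ for $U_0\sim\mathcal{U}(0,1)$, and let $S_{\max}=\{(u,v)\in[0,1]^2:T_g(u)=T_h(v)\}$ and $S_{\min}=\{(u,v)\in[0,1]^2:T_g(u)=1-T_h(v)\}$ be the support sets on which copulas attaining the maximum, respectively minimum, of $\rho_{\{g,h\}}$ are concentrated. Then for every $m_1\in\{1,\dots,M_g\}$, $m_2\in\{1,\dots,M_h\}$ and $S\in\{S_{\max},S_{\min}\}$: if the intersection of $S$ with the rectangle $(a_{g,m_1-1},a_{g,m_1})\times(a_{h,m_2-1},a_{h,m_2})$ is non-empty, then this intersection is a continuous and strictly monotonic curve on the rectangle (the graph of a continuous strictly monotonic function of $u$ on a subinterval of $(a_{g,m_1-1},a_{g,m_1})$).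
   Context: $\psi$ is piecewise continuous and strictly monotonic if there is a finite partition of $[0,1]$ such that $\psi$ is continuous and strictly monotonic on each open subinterval. $\psi$ is regular if it is continuous on $[0,1]$, continuously differentiable on $(0,1)$ with bounded derivative, and $\psi'(u)=0$ iff $u$ is a turning point (interior local extremum) of $\psi$. $\rho_{\{g,h\}}(X,Y)=\rho(g(F_X(X)),h(F_Y(Y)))$ (Pearson correlation). *)

(* Defs.v *)
From HB Require Import structures.
From mathcomp Require Import all_boot all_order all_algebra.
From mathcomp Require Import all_classical all_reals all_analysis.
Set Implicit Arguments. Unset Strict Implicit. Unset Printing Implicit Defensive.
Import Order.TTheory GRing.Theory Num.Theory.
Import numFieldNormedType.Exports.
Local Open Scope classical_set_scope.
Local Open Scope ring_scope.

Section Defs.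
Variable R : realType.

Definition turning_point (g : R -> R) (u : R) : Prop :=
  0 < u < 1 /\
  exists e : R, 0 < e /\
    ((forall x, 0 <= x <= 1 -> `|x - u| < e -> g x <= g u) \/
     (forall x, 0 <= x <= 1 -> `|x - u| < e -> g u <= g x)).

Definition strictly_monotone_on (g : R -> R) (a b : R) : Prop :=
  (forall x y, a < x -> x < y -> y < b -> g x < g y) \/
  (forall x y, a < x -> x < y -> y < b -> g y < g x).

Definition pw_cont_strict_mono (g : R -> R) : Prop :=
  exists (n : nat) (p : nat -> R),
    p 0%N = 0 /\ p n = 1 /\
    (forall i, (i < n)%N -> p i < p i.+1) /\
    (forall i, (i < n)%N ->
       {within `]p i, p i.+1[, continuous g} /\ strictly_monotone_on g (p i) (p i.+1)).

Definition regular (g : R -> R) : Prop :=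
  {within `[0, 1], continuous g} /\
  (forall u, 0 < u < 1 -> derivable g u 1) /\
  (forall u, 0 < u < 1 -> {for u, continuous (derive1 g)}) /\
  (exists M : R, forall u, 0 < u < 1 -> `|derive1 g u| <= M) /\
  (forall u, 0 < u < 1 -> (derive1 g u = 0 <-> turning_point g u)).

Definition turning_partition (g : R -> R) (M : nat) (a : nat -> R) : Prop :=
  a 0%N = 0 /\ a M = 1 /\
  (forall i, (i < M)%N -> a i < a i.+1) /\
  (forall u, turning_point g u <-> exists i, (0 < i < M)%N /\ u = a i).

(* distribution function of g(U0), U0 ~ U(0,1) *)
Definition distr_fun (g : R -> R) (t : R) : R :=
  fine (lebesgue_measure [set u : R | 0 <= u <= 1 /\ g u <= t]).

Definition Tfun (g : R -> R) (u : R) : R := distr_fun g (g u).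

Definition Smax (g h : R -> R) : set (R * R) :=
  [set uv | 0 <= uv.1 <= 1 /\ 0 <= uv.2 <= 1 /\ Tfun g uv.1 = Tfun h uv.2].

Definition Smin (g h : R -> R) : set (R * R) :=
  [set uv | 0 <= uv.1 <= 1 /\ 0 <= uv.2 <= 1 /\ Tfun g uv.1 = 1 - Tfun h uv.2].

End Defs.

(* Main.v *)
Require Import Defs.
From HB Require Import structures.
From mathcomp Require Import all_boot all_order all_algebra.
From mathcomp Require Import all_classical all_reals all_analysis.
From mathcomp Require Import lra ring.
Import Order.TTheory GRing.Theory Num.Theory.
Import numFieldNormedType.Exports.
Local Open Scope classical_set_scope.
Local Open Scope ring_scope.
Set Implicit Arguments. Unset Strict Implicit.


Section S.
Variable R : realType.

Lemma wc_to_ed (X : set R) (f : R -> R) : {within X, continuous f} ->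
  forall x, X x -> forall e, 0 < e -> exists2 d, 0 < d &
    forall y, X y -> `|y - x| < d -> `|f y - f x| < e.
Proof.
move=> /subspace_continuousP H x Xx e e0.
have := H x Xx; move/cvgrPdist_lt => /(_ e e0).
move=> /nbhs_ballP [d d0 Hd].
exists d => // y Xy yx. rewrite distrC. apply: Hd => //.
by rewrite /ball /= distrC.
Qed.

Lemma ed_to_wc (X : set R) (f : R -> R) :
  (forall x, X x -> forall e, 0 < e -> exists2 d, 0 < d &
    forall y, X y -> `|y - x| < d -> `|f y - f x| < e) ->
  {within X, continuous f}.
Proof.
move=> H; apply/subspace_continuousP => x Xx.
apply/cvgrPdist_lt => e e0.
have [d d0 Hd] := H x Xx e e0.
apply/nbhs_ballP; exists d => // y bxy Xy.
rewrite distrC; apply: Hd => //. by move: bxy; rewrite /ball /= distrC.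
Qed.

Definition edc (f : R -> R) (u : R) := forall e, 0 < e -> exists2 d, 0 < d &
    forall x, `|x - u| < d -> `|f x - f u| < e.

Lemma smono_between (A : R -> R) a b x z y :
  strictly_monotone_on A a b -> a < x -> x <= z -> z <= y -> y < b ->
  Num.min (A x) (A y) <= A z <= Num.max (A x) (A y).
Proof.
move=> mA ax xz zy yb.
have [->|xz'] := eqVneq x z; first by rewrite ge_min le_max !lexx.
have [->|zy'] := eqVneq z y; first by rewrite ge_min le_max !lexx !orbT.
have xz2 : x < z by rewrite lt_neqAle xz'.
have zy2 : z < y by rewrite lt_neqAle zy'.
have az : a < z by apply: lt_le_trans xz.
have zb : z < b by apply: le_lt_trans yb.
rewrite ge_min le_max; case: mA => H.
- have h1 := H _ _ ax xz2 zb; have h2 := H _ _ az zy2 yb.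
  by apply/andP; split; apply/orP; [left|right]; apply: ltW.
- have h1 := H _ _ ax xz2 zb; have h2 := H _ _ az zy2 yb.
  by apply/andP; split; apply/orP; [right|left]; apply: ltW.
Qed.

Lemma graph_inc (A B : R -> R) a1 b1 a2 b2 :
  (forall u, a1 < u < b1 -> edc A u) -> strictly_monotone_on A a1 b1 ->
  (forall v, a2 < v < b2 -> edc B v) ->
  (forall x y, a2 < x -> x < y -> y < b2 -> B x < B y) ->
  exists (I : interval R) (phi : R -> R),
    ([set` I] `<=` `]a1, b1[) /\
    {within [set` I], continuous phi} /\
    ((forall x y, x \in I -> y \in I -> x < y -> phi x < phi y) \/
     (forall x y, x \in I -> y \in I -> x < y -> phi y < phi x)) /\
    ([set uv : (R * R)%type | (a1 < uv.1 < b1 /\ a2 < uv.2 < b2) /\ A uv.1 = B uv.2]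
      = [set uv : (R * R)%type | (uv.1 \in I) /\ uv.2 = phi uv.1]).
Proof.
move=> cA mA cB mB.
have mBle : forall x y, a2 < x -> x <= y -> y < b2 -> B x <= B y.
  move=> x y ax; rewrite le_eqVlt; case/orP => [/eqP -> //|xy yb].
  exact/ltW/mB.
pose P u v := (a1 < u < b1 /\ a2 < v < b2) /\ A u = B v.
pose D u := exists v, P u v.
have uniq : forall u v v', P u v -> P u v' -> v = v'.
  move=> u v v' [[_ /andP [av vb]] e1] [[_ /andP [av' vb']] e2].
  case: (ltgtP v v') => // vv'.
  - by have := mB _ _ av vv' vb'; rewrite -e1 -e2 ltxx.
  - by have := mB _ _ av' vv' vb; rewrite -e1 -e2 ltxx.
pose phi u := xget 0 (P u).
have Pphi : forall u, D u -> P u (phi u) by move=> u Du; exact: xgetPex.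
have Dint : is_interval D.
  move=> x y [vx Px] [vy Py] z /andP [xz zy].
  have [[/andP [ax xb] /andP [avx vxb]] ex] := Px.
  have [[/andP [ay yb] /andP [avy vyb]] ey] := Py.
  have az : a1 < z by apply: lt_le_trans xz.
  have zb : z < b1 by apply: le_lt_trans yb.
  have hz := smono_between mA ax xz zy yb.
  rewrite ex ey in hz.
  have cBs : forall lo hi, a2 < lo -> hi < b2 -> {within `[lo, hi], continuous B}.
    move=> lo hi alo hib; apply: ed_to_wc => w; rewrite /= in_itv /= => /andP [lw wh] e e0.
    have hw : a2 < w < b2 by rewrite (lt_le_trans alo lw) (le_lt_trans wh hib).
    have [d d0 Hd] := cB w hw e e0.
    by exists d => // t _ /Hd.
  case: (leP vx vy) => vv.
  - have [c c1 c2] := IVT vv (cBs _ _ avx vyb) hz.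
    exists c; split; last by rewrite c2.
    split; first by rewrite az zb.
    by move: c1; rewrite in_itv /= => /andP [h1 h2];
       rewrite (lt_le_trans avx h1) (le_lt_trans h2 vyb).
  - rewrite minC maxC in hz.
    have [c c1 c2] := IVT (ltW vv) (cBs _ _ avy vxb) hz.
    exists c; split; last by rewrite c2.
    split; first by rewrite az zb.
    by move: c1; rewrite in_itv /= => /andP [h1 h2];
       rewrite (lt_le_trans avy h1) (le_lt_trans h2 vxb).
have DI := (is_intervalP D).1 Dint.
exists (Rhull D), phi.
have inI : forall u, (u \in Rhull D) <-> D u.
  by move=> u; rewrite {2}DI.
split.
  move=> u /= /inI [v [[/andP [h1 h2] _] _]]; by rewrite in_itv /= h1 h2.
split.
  apply: ed_to_wc => u /= /inI Du e e0.
  have [[/andP [au ub] /andP [av vb]] eq0] := Pphi u Du.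
  set v := phi u in av vb eq0 *.
  pose e' := Num.min (e / 2) (Num.min ((v - a2) / 2) ((b2 - v) / 2)).
  have e'0 : 0 < e'.
    by rewrite /e' !lt_min !divr_gt0 // ?subr_gt0.
  have e'e : e' < e.
    rewrite /e' gt_min; apply/orP; left.
    by rewrite ltr_pdivrMr // ltr_pMr // ltr1n.
  have e'1 : e' <= (v - a2) / 2 by rewrite /e' !ge_min lexx !orbT.
  have e'2 : e' <= (b2 - v) / 2 by rewrite /e' !ge_min lexx !orbT.
  have avm : a2 < v - e'.
    rewrite ltrBrDl -ltrBrDr; apply: le_lt_trans e'1 _.
    by rewrite ltr_pdivrMr // ltr_pMr ?subr_gt0 // ltr1n.
  have avp : v + e' < b2.
    rewrite -ltrBrDl; apply: le_lt_trans e'2 _.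
    by rewrite ltr_pdivrMr // ltr_pMr ?subr_gt0 // ltr1n.
  have vmv : v - e' < v by rewrite ltrBlDr ltrDl.
  have vvp : v < v + e' by rewrite ltrDl.
  pose eta := Num.min (B (v + e') - B v) (B v - B (v - e')).
  have eta0 : 0 < eta.
    rewrite /eta lt_min !subr_gt0 mB //=; first exact: mB.
  have hu : a1 < u < b1 by rewrite au ub.
  have [d d0 Hd] := cA u hu eta eta0.
  exists d => // y /inI Dy yu.
  have [[/andP [ay yb] /andP [aw wb]] eqy] := Pphi y Dy.
  have hA := Hd y yu.
  rewrite eqy eq0 in hA.
  move: hA; rewrite ltr_norml => /andP [hA1 hA2].
  have h3 : eta <= B v - B (v - e') by rewrite /eta ge_min lexx orbT.
  have h4 : eta <= B (v + e') - B v by rewrite /eta ge_min lexx.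
  have lo : v - e' < phi y.
    rewrite ltNge; apply/negP => wv.
    have := mBle _ _ aw wv (lt_trans vmv vb); lra.
  have hi : phi y < v + e'.
    rewrite ltNge; apply/negP => wv.
    have := mBle _ _ (lt_trans av vvp) wv wb; lra.
  rewrite ltr_norml; apply/andP; split; lra.
split.
  have key : forall x y, x \in Rhull D -> y \in Rhull D -> A x < A y -> phi x < phi y.
    move=> x y /inI Dx /inI Dy Axy.
    have [[_ /andP [ax xb]] ex] := Pphi x Dx.
    have [[_ /andP [ay yb]] ey] := Pphi y Dy.
    rewrite ltNge; apply/negP => yx.
    have h := mBle _ _ ay yx xb.
    rewrite -ex -ey in h.
    by have := lt_le_trans Axy h; rewrite ltxx.
  case: mA => H; [left|right] => x y xI yI xy.
  - apply: key => //.
    have [[/andP [ax _] _] _] := Pphi x ((inI x).1 xI).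
    have [[/andP [_ yb] _] _] := Pphi y ((inI y).1 yI).
    exact: H.
  - apply: key => //.
    have [[/andP [ax _] _] _] := Pphi x ((inI x).1 xI).
    have [[/andP [_ yb] _] _] := Pphi y ((inI y).1 yI).
    exact: H.
apply/seteqP; split => [[u v]|[u v]] /=.
  move=> Puv; have Du : D u by exists v.
  split; first exact/inI.
  exact: (uniq u v (phi u) Puv (Pphi u Du)).
move=> [/inI Du ->]; exact: Pphi.
Qed.

Lemma edcN f u : edc f u -> edc (fun x => - f x) u.
Proof.
move=> H e e0; have [d d0 Hd] := H e e0; exists d => // x /Hd.
by rewrite -opprD normrN.
Qed.

Lemma smonoN (f : R -> R) (a b : R) : strictly_monotone_on f a b -> strictly_monotone_on (fun x => - f x) a b.
Proof.
by case=> H; [right|left] => x y ax xy yb; rewrite ltrN2; apply: H.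
Qed.

Lemma graph_gen (A B : R -> R) a1 b1 a2 b2 :
  (forall u, a1 < u < b1 -> edc A u) -> strictly_monotone_on A a1 b1 ->
  (forall v, a2 < v < b2 -> edc B v) -> strictly_monotone_on B a2 b2 ->
  exists (I : interval R) (phi : R -> R),
    ([set` I] `<=` `]a1, b1[) /\
    {within [set` I], continuous phi} /\
    ((forall x y, x \in I -> y \in I -> x < y -> phi x < phi y) \/
     (forall x y, x \in I -> y \in I -> x < y -> phi y < phi x)) /\
    ([set uv : (R * R)%type | (a1 < uv.1 < b1 /\ a2 < uv.2 < b2) /\ A uv.1 = B uv.2]
      = [set uv : (R * R)%type | (uv.1 \in I) /\ uv.2 = phi uv.1]).
Proof.
move=> cA mA cB [mB|mB]; first exact: graph_inc.
have cA' : forall u, a1 < u < b1 -> edc (fun x => - A x) u by move=> u /cA /edcN.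
have cB' : forall v, a2 < v < b2 -> edc (fun x => - B x) v by move=> v /cB /edcN.
have mB' : forall x y, a2 < x -> x < y -> y < b2 -> - B x < - B y.
  by move=> x y ax xy yb; rewrite ltrN2; apply: mB.
have [I [phi [h1 [h2 [h3 h4]]]]] := graph_inc cA' (smonoN mA) cB' mB'.
exists I, phi; do 3 (split => //).
rewrite -h4; apply/seteqP; split => [[u v]|[u v]] /= [H1 H2]; split => //.
- by rewrite H2.
- exact: oppr_inj.
Qed.
End S.

Section G.
Variable R : realType.
Implicit Types (g : R -> R) (a : nat -> R).

Lemma tp_mono g M a : turning_partition g M a ->
  forall i j, (i <= j <= M)%N -> a i <= a j.
Proof.
move=> [a0 [aM [inc _]]] i j /andP [].
elim: j => [|j IH]; first by rewrite leqn0 => /eqP ->.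
rewrite leq_eqVlt => /orP [/eqP -> //|ij] jM.
apply: le_trans (IH ij (ltnW jM)) _; exact/ltW/inc.
Qed.

Lemma tp_strict g M a : turning_partition g M a ->
  forall i j, (i < j <= M)%N -> a i < a j.
Proof.
move=> tp i j /andP [ij jM].
have [a0 [aM [inc _]]] := tp.
case: j ij jM => // j ij jM.
apply: le_lt_trans (inc j jM).
by apply: (tp_mono tp); rewrite -ltnS ij ltnW.
Qed.

Lemma tp_M g M a : turning_partition g M a -> (0 < M)%N.
Proof.
move=> [a0 [aM _]]; case: M aM => // /esym; rewrite a0 => /eqP.
by rewrite oner_eq0.
Qed.

Lemma tp_01 g M a : turning_partition g M a -> forall i, (i <= M)%N -> 0 <= a i <= 1.
Proof.
move=> tp i iM; have [a0 [aM _]] := tp.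
apply/andP; split; [rewrite -a0 | rewrite -aM]; apply: (tp_mono tp); by rewrite iM ?leqnn.
Qed.

Lemma tp_cover g M a : turning_partition g M a -> forall x, 0 <= x <= 1 ->
  exists i, (i < M)%N /\ a i <= x <= a i.+1.
Proof.
move=> tp x /andP [x0 x1]; have [a0 [aM _]] := tp.
suff H : forall n, (0 < n <= M)%N -> x <= a n -> exists i, (i < n)%N /\ a i <= x <= a i.+1.
  have hM : (0 < M <= M)%N by rewrite (tp_M tp) leqnn.
  have [i [iM h]] := H M hM (eq_ind_r (fun z => x <= z) x1 aM).
  by exists i.
elim=> // n IH /andP [_ nM] xn.
case: n IH nM xn => [|n] IH nM xn; first by exists 0%N; rewrite a0 x0 xn.
case: (leP x (a n.+1)) => h.
- have [i [ilt hi]] := IH (ltnW nM) h. by exists i; split => //; apply: ltn_trans ilt _.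
- by exists n.+1; rewrite (ltW h) xn.
Qed.

Lemma tp_nz g M a : regular g -> turning_partition g M a ->
  forall i, (i < M)%N -> forall u, a i < u < a i.+1 -> derive1 g u != 0.
Proof.
move=> [_ [_ [_ [_ rz]]]] tp i iM u /andP [h1 h2].
have [a0 [aM [inc tpe]]] := tp.
have u01 : 0 < u < 1.
  have := tp_01 tp (ltnW iM); have := tp_01 tp iM => /andP [? ?] /andP [? ?].
  apply/andP; split; [exact: le_lt_trans h1 | exact: lt_le_trans h2 _].
apply/eqP => /(rz u u01) /tpe [j [/andP [j0 jM] uj]].
case: (leqP j i) => ji.
- by have := tp_mono tp (i:=j) (j:=i); rewrite ji (ltnW iM) => /(_ isT); rewrite -uj leNgt h1.
- by have := tp_mono tp (i:=i.+1) (j:=j); rewrite ji (ltnW jM) => /(_ isT); rewrite -uj leNgt h2.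
Qed.

Definition smono_cl g (a b : R) :=
  (forall x y, a <= x -> x < y -> y <= b -> g x < g y) \/
  (forall x y, a <= x -> x < y -> y <= b -> g y < g x).

Lemma piece_smono g (a b : R) : regular g -> 0 <= a -> a < b -> b <= 1 ->
  (forall u, a < u < b -> derive1 g u != 0) -> smono_cl g a b.
Proof.
move=> [cg [dg [cdg _]]] a0 ab b1 nz.
have in01 : forall u, a < u < b -> 0 < u < 1.
  move=> u /andP [h1 h2]; apply/andP; split; [exact: le_lt_trans h1|exact: lt_le_trans h2 _].
have sgn : forall c d, a < c < b -> a < d < b -> 0 < derive1 g c -> 0 < derive1 g d.
  move=> c d hc hd gc; rewrite ltNge; apply/negP => gd.
  have gd' : derive1 g d < 0 by rewrite lt_neqAle gd nz.
  pose lo := Num.min c d; pose hi := Num.max c d.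
  have lohi : lo <= hi by rewrite /lo /hi ge_min le_max lexx.
  have inab : forall w, w \in `[lo, hi] -> a < w < b.
    move=> w; rewrite in_itv /= /lo /hi ge_min le_max => /andP [] /orP [] h1 /orP [] h2;
    move: hc hd => /andP [? ?] /andP [? ?]; apply/andP; split;
    (apply: lt_le_trans h1 || apply: le_lt_trans h2 _) => //.
  have cont : {within `[lo, hi], continuous (derive1 g)}.
    apply: continuous_in_subspaceT => w /[!inE] /inab /in01 w01; exact: cdg.
  have : Num.min (derive1 g lo) (derive1 g hi) <= 0 <= Num.max (derive1 g lo) (derive1 g hi).
    rewrite /lo /hi; case: (leP c d) => cd.
    - by rewrite ge_min le_max (ltW gd') (ltW gc) orbT.
    - by rewrite ge_min le_max (ltW gd') (ltW gc) orbT.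
  move=> /(IVT lohi cont) [w /inab wab /eqP]; by rewrite (negbTE (nz w wab)).
pose m := (a + b) / 2.
have hm : a < m < b by apply/andP; split; rewrite /m; lra.
have mvt : forall x y, a <= x -> x < y -> y <= b ->
    exists2 c, a < c < b & g y - g x = derive1 g c * (y - x).
  move=> x y ax xy yb.
  have hd : forall w, w \in `]x, y[ -> is_derive w 1 g (derive1 g w).
    move=> w; rewrite in_itv /= => /andP [h1 h2].
    have wab : a < w < b by apply/andP; split; [exact: le_lt_trans h1 | exact: lt_le_trans h2 _].
    rewrite derive1E; apply: derivableP; exact/dg/in01.
  have hc : {within `[x, y], continuous g}.
    apply: continuous_subspaceW cg => w /=; rewrite !in_itv /= => /andP [h1 h2].
    by apply/andP; split; lra.
  have [c cin ->] := MVT xy hd hc.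
  exists c => //; move: cin; rewrite in_itv /= => /andP [h1 h2].
  by apply/andP; split; [exact: le_lt_trans h1 | exact: lt_le_trans h2 _].
case: (ltP 0 (derive1 g m)) => gm.
- left => x y ax xy yb; have [c hc e] := mvt x y ax xy yb.
  have := sgn m c hm hc gm => gc.
  rewrite -subr_gt0 e; apply: mulr_gt0 => //; rewrite subr_gt0 //.
- right => x y ax xy yb; have [c hc e] := mvt x y ax xy yb.
  have gc : derive1 g c < 0.
    rewrite ltNge; apply/negP => gc.
    have gc' : 0 < derive1 g c by rewrite lt_neqAle eq_sym nz.
    have := sgn c m hc hm gc'; rewrite ltNge gm //.
  rewrite -subr_gt0 -opprB e -mulNr; apply: mulr_gt0; rewrite ?oppr_gt0 ?subr_gt0 //.
Qed.
End G.

Section D.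
Variable R : realType.
Implicit Types (g : R -> R) (a b : R).

Definition edw g (a b : R) := forall x, a <= x <= b -> forall e, 0 < e -> exists2 d, 0 < d &
  forall y, a <= y <= b -> `|y - x| < d -> `|g y - g x| < e.

Lemma diam_inc g a b : a < b -> edw g a b ->
  (forall x y, a <= x -> x < y -> y <= b -> g x < g y) ->
  forall eps, 0 < eps -> exists2 del, 0 < del & forall x y, a <= x <= b -> a <= y <= b ->
    `|g x - g y| <= del -> `|x - y| <= eps.
Proof.
move=> ab cg inc eps eps0.
case: (leP (b - a) eps) => hba.
  exists 1 => // x y /andP [? ?] /andP [? ?] _; rewrite ler_norml; apply/andP; split; lra.
pose k x := g (x + eps) - g x.
have kc : {within `[a, b - eps], continuous k}.
  apply: ed_to_wc => x /=; rewrite in_itv /= => /andP [h1 h2] e e0.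
  have e20 : 0 < e / 2 by rewrite divr_gt0.
  have hx1 : a <= x + eps <= b by apply/andP; split; lra.
  have hx2 : a <= x <= b by apply/andP; split; lra.
  have [d1 d10 H1] := cg _ hx1 _ e20.
  have [d2 d20 H2] := cg _ hx2 _ e20.
  exists (Num.min d1 d2); first by rewrite lt_min d10 d20.
  move=> y; rewrite in_itv /= => /andP [k1 k2]; rewrite lt_min => /andP [yd1 yd2].
  have hy1 : a <= y + eps <= b by apply/andP; split; lra.
  have hy2 : a <= y <= b by apply/andP; split; lra.
  have := H1 _ hy1; rewrite (_ : y + eps - (x + eps) = y - x); last by ring.
  move=> /(_ yd1); rewrite ltr_norml => /andP [p1 p2].
  have := H2 _ hy2 yd2; rewrite ltr_norml => /andP [p3 p4].
  rewrite /k ltr_norml; apply/andP; split; lra.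
have abe : a <= b - eps by lra.
have [c cin cmin] := EVT_min abe kc.
move: cin; rewrite in_itv /= => /andP [c1 c2].
have kc0 : 0 < k c by rewrite /k subr_gt0; apply: inc; lra.
exists (k c / 2); first by rewrite divr_gt0.
have key : forall x y, a <= x -> x < y -> y <= b -> eps < y - x -> k c / 2 < g y - g x.
  move=> x y ax xy yb h.
  have hx : x \in `[a, b - eps] by rewrite in_itv /=; apply/andP; split; lra.
  have := cmin x hx; rewrite /k => h1.
  have h2 : g (x + eps) < g y by apply: inc; lra.
  rewrite /k in kc0; lra.
move=> x y /andP [x1 x2] /andP [y1 y2]; rewrite ler_norml => /andP [q1 q2].
rewrite leNgt; apply/negP; rewrite ltr_normr => /orP [] h.
- have := key y x y1 _ x2 _; lra.
- have := key x y x1 _ y2 _; lra.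
Qed.

Lemma diam_gen g a b : a < b -> edw g a b -> smono_cl g a b ->
  forall eps, 0 < eps -> exists2 del, 0 < del & forall x y, a <= x <= b -> a <= y <= b ->
    `|g x - g y| <= del -> `|x - y| <= eps.
Proof.
move=> ab cg [inc|dec]; first exact: diam_inc.
have cg' : edw (fun x => - g x) a b.
  move=> x hx e e0; have [d d0 H] := cg x hx e e0; exists d => // y hy /(H y hy).
  by rewrite -opprD normrN.
have inc' : forall x y, a <= x -> x < y -> y <= b -> - g x < - g y.
  by move=> x y ax xy yb; rewrite ltrN2; apply: dec.
move=> eps eps0; have [del d0 H] := diam_inc ab cg' inc' eps0.
exists del => // x y hx hy hg; apply: H => //; by rewrite -opprD normrN.
Qed.

Local Notation mu := (@lebesgue_measure R).

Lemma mu_le (A B : set R) : A `<=` B -> (mu A <= mu B)%E.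
Proof. move=> AB. exact: le_mu_ext. Qed.

Lemma mu_U2 (A B : set R) : (mu (A `|` B) <= mu A + mu B)%E.
Proof. exact: (outer_measureU2 (mu_ext (wlength idfun))). Qed.

Lemma mu_cara (A B : set R) : measurable B -> mu A = (mu (A `&` B) + mu (A `&` ~` B))%E.
Proof. move=> mB.
have := @sub_caratheodory _ _ _ (wlength (idfun : cumulative R R)) B.
move=> H. apply: H. exact: mB. Qed.

Lemma mu_ccitv (x y : R) : x <= y -> mu `[x, y] = (y - x)%:E.
Proof.
move=> xy; rewrite lebesgue_measure_itv /=.
case: ifPn; first by rewrite -EFinB.
rewrite lte_fin -leNgt => yx.
have -> : x = y by apply/le_anti; rewrite xy yx.
by rewrite subrr.
Qed.

Lemma mu_01 (X : set R) : X `<=` [set x | 0 <= x <= 1] ->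
  mu X = (fine (mu X))%:E /\ 0 <= fine (mu X) <= 1.
Proof.
move=> X01.
have h1 : (mu X <= 1%:E)%E.
  apply: le_trans (mu_le (B := `[0, 1]) _) _.
    by move=> x /X01 /= h; rewrite in_itv /=.
  by rewrite mu_ccitv // subr0.
have h0 : (0 <= mu X)%E by apply: measure_ge0.
have fin : mu X \is a fin_num.
  by rewrite ge0_fin_numE //; apply: le_lt_trans h1 _; rewrite ltry.
split; first by rewrite fineK.
by rewrite -lee_fin -(lee_fin _ 1) fineK // h0 h1.
Qed.

Lemma piece_small g a b : 0 <= a -> a < b -> b <= 1 -> edw g a b -> smono_cl g a b ->
  forall t eps, 0 < eps -> exists2 del, 0 < del &
    (mu [set x | (a <= x <= b /\ `|g x - t| <= del)%R] <= eps%:E)%E.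
Proof.
move=> a0 ab b1 cg sm t eps eps0.
have e2 : 0 < eps / 2 by rewrite divr_gt0.
have [del d0 H] := diam_gen ab cg sm e2.
exists (del / 2); first by rewrite divr_gt0.
case: (pselect (exists x0, a <= x0 <= b /\ `|g x0 - t| <= del / 2)) => [[x0 [hx0 gx0]]|nE].
- apply: le_trans (mu_le (B := `[x0 - eps / 2, x0 + eps / 2]) _) _.
    move=> x /= [hx gx]; rewrite in_itv /=.
    have : `|g x - g x0| <= del.
      move: gx gx0; rewrite !ler_norml => /andP [p1 p2] /andP [p3 p4].
      apply/andP; split; lra.
    move=> /(H x x0 hx hx0); rewrite ler_norml => /andP [p1 p2].
    apply/andP; split; lra.
  rewrite mu_ccitv; last lra.
  by rewrite lee_fin; lra.
- have -> : [set x | a <= x <= b /\ `|g x - t| <= del / 2] = set0.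
    apply/seteqP; split => x //= hx; apply: nE; by exists x.
  by rewrite measure0 lee_fin ltW.
Qed.
End D.

Section M.
Variable R : realType.
Implicit Types (g : R -> R).
Local Notation mu := (@lebesgue_measure R).

Definition Nset g (t del : R) := [set x : R | 0 <= x <= 1 /\ `|g x - t| <= del].
Definition Eset g (t : R) := [set u : R | 0 <= u <= 1 /\ g u <= t].

Lemma edw_reg g a b : regular g -> 0 <= a -> b <= 1 -> edw g a b.
Proof.
move=> [cg _] a0 b1 x /andP [x1 x2] e e0.
have x01 : x \in `[0, 1] by rewrite in_itv /=; apply/andP; split; lra.
have [d d0 H] := wc_to_ed cg x01 e0.
exists d => // y /andP [y1 y2]; apply: H; rewrite /= in_itv /=; apply/andP; split; lra.
Qed.

Lemma piece_ok g M a : regular g -> turning_partition g M a -> forall i, (i < M)%N ->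
  [/\ 0 <= a i, a i < a i.+1, a i.+1 <= 1 & smono_cl g (a i) (a i.+1)].
Proof.
move=> rg tp i iM.
have /andP [h1 _] := tp_01 tp (ltnW iM).
have /andP [_ h2] := tp_01 tp iM.
have h3' : a i < a i.+1 by have [_ [_ [inc _]]] := tp; exact: inc.
split => //; apply: piece_smono => //; exact: (tp_nz rg tp iM).
Qed.

Lemma N_small g M a : regular g -> turning_partition g M a ->
  forall t eps, 0 < eps -> exists2 del, 0 < del & (mu (Nset g t del) <= eps%:E)%E.
Proof.
move=> rg tp t.
have [a0 [aM _]] := tp.
suff H : forall n, (n <= M)%N -> forall eps, 0 < eps -> exists2 del, 0 < del &
    (mu [set x | (0 <= x <= a n /\ `|g x - t| <= del)%R] <= eps%:E)%E.
  move=> eps eps0; have [del d0 Hd] := H M (leqnn M) eps eps0.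
  exists del => //; apply: le_trans Hd; apply: mu_le => x [h1 h2]; split => //.
  by rewrite aM.
elim=> [_|n IH nM] eps eps0.
  exists 1 => //; apply: le_trans (mu_le (B := `[0, 0]) _) _.
    by move=> x [/andP [h1 h2] _] /=; rewrite a0 in h2; rewrite in_itv /= h1 h2.
  by rewrite mu_ccitv // subrr lee_fin ltW.
have e2 : 0 < eps / 2 by rewrite divr_gt0.
have [d1 d10 H1] := IH (ltnW nM) _ e2.
have [p1 p2 p3 p4] := piece_ok rg tp nM.
have [d2 d20 H2] := piece_small p1 p2 p3 (edw_reg rg p1 p3) p4 t e2.
exists (Num.min d1 d2); first by rewrite lt_min d10 d20.
apply: le_trans (mu_le (B := [set x | (0 <= x <= a n /\ `|g x - t| <= d1)%R] `|`
   [set x | (a n <= x <= a n.+1 /\ `|g x - t| <= d2)%R]) _) _.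
  move=> x [/andP [x1 x2]]; rewrite le_min => /andP [q1 q2].
  case: (leP x (a n)) => xn; [left|right]; split => //; apply/andP; split => //.
  exact: ltW.
apply: le_trans (mu_U2 _ _) _.
apply: le_trans (leeD H1 H2) _.
by rewrite -EFinD lee_fin; lra.
Qed.

Lemma F_diff g (x t : R) :
  `|distr_fun g x - distr_fun g t| <= fine (mu (Nset g t `|x - t|)).
Proof.
have sE : forall s, Eset g s `<=` [set x | 0 <= x <= 1] by move=> s y [h _].
have sN : Nset g t `|x - t| `<=` [set x | 0 <= x <= 1] by move=> y [h _].
have [eN /andP [n0 _]] := mu_01 sN.
have [ex /andP [fx0 _]] := mu_01 (sE x).
have [et /andP [ft0 _]] := mu_01 (sE t).
rewrite /distr_fun -/(Eset g x) -/(Eset g t).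
set Fx := fine (mu (Eset g x)) in ex fx0 *.
set Ft := fine (mu (Eset g t)) in et ft0 *.
set n := fine (mu (Nset g t `|x - t|)) in eN n0 *.
case: (leP t x) => tx.
- have h1 : (mu (Eset g t) <= mu (Eset g x))%E.
    by apply: mu_le => y [? ?]; split => //; lra.
  have h2 : (mu (Eset g x) <= mu (Eset g t) + mu (Nset g t `|(x - t)%R|))%E.
    apply: le_trans (mu_U2 _ _); apply: mu_le => y [y01 gy].
    case: (leP (g y) t) => gyt; [left|right]; split => //.
    rewrite (ger0_norm (ltW _)) ?subr_gt0 // (ger0_norm) ?subr_ge0 //; lra.
  rewrite ex et eN -EFinD !lee_fin in h1 h2.
  rewrite ler_norml; apply/andP; split; lra.
- have h1 : (mu (Eset g x) <= mu (Eset g t))%E.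
    by apply: mu_le => y [? ?]; split => //; lra.
  have h2 : (mu (Eset g t) <= mu (Eset g x) + mu (Nset g t `|(x - t)%R|))%E.
    apply: le_trans (mu_U2 _ _); apply: mu_le => y [y01 gy].
    case: (leP (g y) x) => gyt; [left|right]; split => //.
    rewrite (ler0_norm) ?subr_le0 // (ltr0_norm) ?subr_lt0 //; lra.
  rewrite ex et eN -EFinD !lee_fin in h1 h2.
  rewrite ler_norml; apply/andP; split; lra.
Qed.

Lemma F_edc g M a : regular g -> turning_partition g M a -> forall t, edc (distr_fun g) t.
Proof.
move=> rg tp t e e0.
have e2 : 0 < e / 2 by rewrite divr_gt0.
have [d d0 Hd] := N_small rg tp t e2.
exists d => // x xt.
apply: le_lt_trans (F_diff g x t) _.
have sN : Nset g t `|x - t| `<=` [set x | 0 <= x <= 1] by move=> y [h _].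
have [eN _] := mu_01 sN.
have : (mu (Nset g t `|(x - t)%R|) <= ((e / 2)%R)%:E)%E.
  apply: le_trans Hd; apply: mu_le => y [h1 h2]; split => //; lra.
rewrite eN lee_fin => h; lra.
Qed.

Lemma F_strict g (t t' : R) (B : set R) : measurable B -> B `<=` [set x | 0 <= x <= 1] ->
  (forall x, B x -> t < g x <= t') -> t <= t' ->
  distr_fun g t + fine (mu B) <= distr_fun g t'.
Proof.
move=> mB B01 hB tt'.
have sE : forall s, Eset g s `<=` [set x | 0 <= x <= 1] by move=> s y [h _].
have [eB _] := mu_01 B01.
have [ex _] := mu_01 (sE t').
have [et _] := mu_01 (sE t).
rewrite /distr_fun -/(Eset g t) -/(Eset g t').
have h := mu_cara (Eset g t') mB.
have h1 : Eset g t' `&` B = B.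
  apply/seteqP; split => [y [] //|y By]; split => //; split; first exact: B01.
  by have /andP [_ ->] := hB y By.
have h2 : (mu (Eset g t) <= mu (Eset g t' `&` ~` B))%E.
  apply: mu_le => y [y01 gy]; split; first by split => //; lra.
  move=> /hB /andP [gy' _]; lra.
rewrite h1 in h.
have h3 : (mu (Eset g t) + mu B <= mu (Eset g t'))%E.
  by rewrite h addeC; apply: leeD.
rewrite ex et eB -EFinD lee_fin in h3; lra.
Qed.

Lemma T_smono g M a : regular g -> turning_partition g M a -> forall i, (i < M)%N ->
  strictly_monotone_on (Tfun g) (a i) (a i.+1).
Proof.
move=> rg tp i iM.
have [p1 p2 p3 [inc|dec]] := piece_ok rg tp iM; [left|right] => u u' au uu' ub.
- have B01 : `]u, u'] `<=` [set x | 0 <= x <= 1].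
    move=> y; rewrite /= in_itv /= => /andP [h1 h2]; apply/andP; split; lra.
  have := @F_strict g (g u) (g u') _ (measurable_itv _) B01.
  rewrite /Tfun; move=> /(_ _ _) H.
  have hB : forall x, x \in `]u, u'] -> g u < g x <= g u'.
    move=> x; rewrite /= in_itv /= => /andP [h1 h2].
    apply/andP; split; first by apply: inc; lra.
    case: (eqVneq x u') => [->//|xne]; apply/ltW/inc; [lra| |lra].
    by rewrite lt_neqAle xne h2.
  have gg : g u <= g u' by apply/ltW/inc; lra.
  have := H hB gg.
  have [eB _] := mu_01 B01.
  have : mu `]u, u'] = (u' - u)%:E.
    rewrite lebesgue_measure_itv /= lte_fin uu' -EFinB //.
  move=> e1; rewrite e1 /= => h2; lra.
- have B01 : `[u, u'[ `<=` [set x | 0 <= x <= 1].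
    move=> y; rewrite /= in_itv /= => /andP [h1 h2]; apply/andP; split; lra.
  have := @F_strict g (g u') (g u) _ (measurable_itv _) B01.
  rewrite /Tfun; move=> /(_ _ _) H.
  have hB : forall x, x \in `[u, u'[ -> g u' < g x <= g u.
    move=> x; rewrite /= in_itv /= => /andP [h1 h2].
    apply/andP; split; first by apply: dec; lra.
    case: (eqVneq x u) => [->//|xne]; apply/ltW/dec; [lra| |lra].
    by rewrite lt_neqAle eq_sym xne h1.
  have gg : g u' <= g u by apply/ltW/dec; lra.
  have := H hB gg.
  have : mu `[u, u'[ = (u' - u)%:E.
    rewrite lebesgue_measure_itv /= lte_fin uu' -EFinB //.
  move=> e1; rewrite e1 /= => h2; lra.
Qed.

Lemma T_edc g M a : regular g -> turning_partition g M a -> forall u, 0 < u < 1 ->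
  edc (Tfun g) u.
Proof.
move=> rg tp u /andP [u0 u1] e e0.
have [d1 d10 H1] := F_edc rg tp (g u) e0.
have [cg _] := rg.
have x01 : u \in `[0, 1] by rewrite in_itv /=; apply/andP; split; lra.
have [d2 d20 H2] := wc_to_ed cg x01 d10.
exists (Num.min d2 (Num.min u (1 - u))).
  by rewrite !lt_min d20 u0 subr_gt0 u1.
move=> x; rewrite !lt_min => /andP [xd2 /andP [xu xu']].
rewrite /Tfun; apply: H1; apply: H2 => //.
move: xu xu'; rewrite !ltr_norml => /andP [h1 h2] /andP [h3 h4].
by rewrite /= in_itv /=; apply/andP; split; lra.
Qed.
End M.

Lemma common (R : realType) g h (Mg Mh : nat) (ag ah : nat -> R) (B : R -> R) i j :
  regular g -> regular h -> turning_partition g Mg ag -> turning_partition h Mh ah ->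
  (i < Mg)%N -> (j < Mh)%N ->
  (forall v, ah j < v < ah j.+1 -> edc B v) -> strictly_monotone_on B (ah j) (ah j.+1) ->
  exists (I : interval R) (phi : R -> R),
    ([set` I] `<=` `]ag i, ag i.+1[) /\
    {within [set` I], continuous phi} /\
    ((forall x y, x \in I -> y \in I -> x < y -> phi x < phi y) \/
     (forall x y, x \in I -> y \in I -> x < y -> phi y < phi x)) /\
    ([set uv : (R * R)%type | (0 <= uv.1 <= 1 /\ 0 <= uv.2 <= 1 /\ Tfun g uv.1 = B uv.2) /\
       (ag i < uv.1 < ag i.+1 /\ ah j < uv.2 < ah j.+1)]
      = [set uv : (R * R)%type | (uv.1 \in I) /\ uv.2 = phi uv.1]).
Proof.
move=> rg rh tpg tph iM jM cB mB.
have [p1 p2 p3 _] := piece_ok rg tpg iM.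
have [q1 q2 q3 _] := piece_ok rh tph jM.
have cA : forall u, ag i < u < ag i.+1 -> edc (Tfun g) u.
  move=> u /andP [h1 h2]; apply: (T_edc rg tpg); apply/andP; split; lra.
have [I [phi [h1 [h2 [h3 h4]]]]] := graph_gen cA (T_smono rg tpg iM) cB mB.
exists I, phi; do 3 (split => //).
rewrite -h4; apply/seteqP; split => [[u v]|[u v]] /=.
- by move=> [[_ [_ e]] [r1 r2]].
- move=> [[/andP [r1 r2] /andP [r3 r4]] e]; split.
  have hu : 0 <= u <= 1 by apply/andP; split; lra.
  have hv : 0 <= v <= 1 by apply/andP; split; lra.
  exact: (conj hu (conj hv e)).
  by split; apply/andP; split.
Qed.

Unset Implicit Arguments.
Theorem proposition8 (R : realType) (g h : R -> R)
  (Mg Mh : nat) (ag ah : nat -> R) :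
  pw_cont_strict_mono g -> regular g ->
  pw_cont_strict_mono h -> regular h ->
  turning_partition g Mg ag -> turning_partition h Mh ah ->
  forall (m1 m2 : nat), (1 <= m1 <= Mg)%N -> (1 <= m2 <= Mh)%N ->
  forall S : set (R * R)%type, S = Smax g h \/ S = Smin g h ->
  let rect := [set uv : (R * R)%type | ag m1.-1 < uv.1 < ag m1 /\ ah m2.-1 < uv.2 < ah m2] in
  S `&` rect !=set0 ->
  exists (I : interval R) (phi : R -> R),
    ([set` I] `<=` `]ag m1.-1, ag m1[) /\
    {within [set` I], continuous phi} /\
    ((forall x y, x \in I -> y \in I -> x < y -> phi x < phi y) \/
     (forall x y, x \in I -> y \in I -> x < y -> phi y < phi x)) /\
    (S `&` rect = [set uv : (R * R)%type | (uv.1 \in I) /\ uv.2 = phi uv.1]).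
Proof.
move=> _ rg _ rh tpg tph [|i] [|j] //= iM jM S [->|->] _.
- apply: (@common R g h Mg Mh ag ah (Tfun h) i j rg rh tpg tph iM jM).
    move=> v /andP [v1 v2]; have [q1 q2 q3 _] := piece_ok rh tph jM.
    apply: (T_edc rh tph); apply/andP; split; lra.
  exact: (T_smono rh tph jM).
- apply: (@common R g h Mg Mh ag ah (fun v => 1 - Tfun h v) i j rg rh tpg tph iM jM).
    move=> v /andP [v1 v2]; have [q1 q2 q3 _] := piece_ok rh tph jM.
    have hv : 0 < v < 1 by apply/andP; split; lra.
    move=> e e0; have [d d0 H] := T_edc rh tph hv e0.
    exists d => // x /H; congr (_ < _).
    rewrite -normrN; congr (`|_|); ring.
  by case: (T_smono rh tph jM) => H; [right|left] => x y h1 h2 h3;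
    rewrite ltrD2l ltrN2; apply: H.
Qed.
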